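(* Let $S\subseteq\mathbb{R}^{n_1}\times\dots\times\mathbb{R}^{n_m}\times\mathbb{R}^p$, with elements written $(x^1,\dots,x^m,z)$. (1) If $S$ is permutation-invariant with respect to $x^k$ for every $k=1,\dots,m$, then $\mathrm{conv}(S)=\{(x^1,\dots,x^m,z)\mid \exists u^1,\dots,u^m:\ (u^1,\dots,u^m,z)\in\mathrm{conv}(S_0),\ u^k\ge_m x^k,\ k=1,\dots,m\}$, where $S_0=S\cap(\Delta^{n_1}\times\dots\times\Delta^{n_m}\times\mathbb{R}^p)$. (2) If $S$ is sign-invariant with respect to $x^k$ for every $k$, then $\mathrm{conv}(S)=\{(x^1,\dots,x^m,z)\mid \exists u^1,\dots,u^m:\ (u^1,\dots,u^m,z)\in\mathrm{conv}(S_0),\ u^k\ge|x^k|,\ k=1,\dots,m\}$, where $S_0=S\cap(\mathbb{R}^{n_1}_+\times\dots\times\mathbb{R}^{n_m}_+\times\mathbb{R}^p)$. (3) If $S$ is both permutation-invariant and sign-invariant with respect to $x^k$ for every $k$, then $\mathrm{conv}(S)=\{(x^1,\dots,x^m,z)\mid \exists u^1,\dots,u^m:\ (u^1,\dots,u^m,z)\in\mathrm{conv}(S_0),\ u^k\ge_{wm}|x^k|,\ k=1,\dots,m\}$, where $S_0=S\cap\{(u^1,\dots,u^m,z)\mid u^k_1\ge\dots\ge u^k_{n_k}\ge 0,\ k=1,\dots,m\}$.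
   Context: $\Delta^n=\{x\in\mathbb{R}^n\mid x_1\ge\dots\ge x_n\}$. $S$ is permutation-invariant with respect to $x^k$ if replacing $x^k$ by $Px^k$, for any $n_k\times n_k$ permutation matrix $P$, keeps the point in $S$; it is sign-invariant with respect to $x^k$ if replacing $x^k$ by any $\bar x^k$ with $|\bar x^k|=|x^k|$ (componentwise absolute value) keeps the point in $S$. For $x\in\mathbb{R}^n$, $x_{[i]}$ is the $i$-th largest component. $x\ge_m y$ means $\sum_{i=1}^j x_{[i]}\ge\sum_{i=1}^j y_{[i]}$ for $j<n$ with equality for $j=n$; $x\ge_{wm}y$ means $\sum_{i=1}^j x_{[i]}\ge\sum_{i=1}^j y_{[i]}$ for all $j=1,\dots,n$. Inequalities between vectors are componentwise. *)

(* Defs.v *)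
(* Points of R^{n_1} x ... x R^{n_m} x R^p are pairs
   (x, z) with x k : 'I_(n k) -> R the block x^k and z : 'I_p -> R. *)
From HB Require Import structures.
From mathcomp Require Import all_boot all_order all_algebra all_fingroup.
Set Implicit Arguments. Unset Strict Implicit. Unset Printing Implicit Defensive.
Import Order.TTheory GRing.Theory Num.Theory.
Local Open Scope ring_scope.

Section Defs.
Variables (R : realFieldType) (m : nat) (n : 'I_m -> nat) (p : nat).

Definition point : Type := ((forall k : 'I_m, 'I_(n k) -> R) * ('I_p -> R))%type.

Definition conv (S : point -> Prop) (y : point) : Prop :=
  exists (N : nat) (l : 'I_N -> R) (s : 'I_N -> point),
    [/\ (forall i, 0 <= l i), \sum_(i < N) l i = 1, (forall i, S (s i)),
        (forall k j, y.1 k j = \sum_(i < N) l i * (s i).1 k j) &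
        (forall j, y.2 j = \sum_(i < N) l i * (s i).2 j)].

Definition perm_invariant (S : point -> Prop) (k : 'I_m) : Prop :=
  forall y y' : point, S y ->
    (forall k', k' != k -> forall j, y'.1 k' j = y.1 k' j) ->
    (forall j, y'.2 j = y.2 j) ->
    (exists s : 'S_(n k), forall j, y'.1 k j = y.1 k (s j)) ->
    S y'.

Definition sign_invariant (S : point -> Prop) (k : 'I_m) : Prop :=
  forall y y' : point, S y ->
    (forall k', k' != k -> forall j, y'.1 k' j = y.1 k' j) ->
    (forall j, y'.2 j = y.2 j) ->
    (forall j, `|y'.1 k j| = `|y.1 k j|) ->
    S y'.
End Defs.
Arguments point : clear implicits.

(* x_[i] : i-th largest component (0-based index i) *)
Definition sorted_desc (R : realFieldType) (q : nat) (x : 'I_q -> R) : seq R :=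
  sort (fun a b : R => b <= a) [seq x i | i <- enum 'I_q].

Definition topsum (R : realFieldType) (q : nat) (x : 'I_q -> R) (j : nat) : R :=
  \sum_(i < j) nth 0 (sorted_desc x) i.

Definition majorizes (R : realFieldType) (q : nat) (x y : 'I_q -> R) : Prop :=
  (forall j, (j < q)%N -> topsum y j <= topsum x j) /\ topsum x q = topsum y q.

Definition wmajorizes (R : realFieldType) (q : nat) (x y : 'I_q -> R) : Prop :=
  forall j, (j <= q)%N -> topsum y j <= topsum x j.

Definition in_Delta (R : realFieldType) (q : nat) (x : 'I_q -> R) : Prop :=
  forall i j : 'I_q, (i <= j)%N -> x j <= x i.

(* Main.v *)
Require Import Defs.
From HB Require Import structures.
From mathcomp Require Import all_boot all_order all_algebra all_fingroup.
From mathcomp Require Import lra ring.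
From Stdlib Require Import FunctionalExtensionality.
Set Implicit Arguments. Unset Strict Implicit. Unset Printing Implicit Defensive.
Import Order.TTheory GRing.Theory Num.Theory.
Local Open Scope ring_scope.

Section Vec.
Variables (R : realFieldType) (q : nat).
Implicit Types (a b c x v : 'I_q -> R).

Definition Ps (j : nat) (v : 'I_q -> R) := \sum_(i < q | (i < j)%N) v i.

Definition sv x : 'I_q -> R := fun i => nth 0 (sorted_desc x) i.

Lemma sv_perm x : exists s : 'S_q, forall i, sv x i = x (s i).
Proof.
have pe : perm_eq (sorted_desc x) (map_tuple x (ord_tuple q)).
  by rewrite /sorted_desc perm_sort; exact: perm_refl.
have [s hs] := tuple_permP pe; exists s => i.
rewrite /sv hs /= (nth_map i) ?size_enum_ord // nth_ord_enum.
by rewrite tnth_map tnth_ord_tuple.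
Qed.

Lemma size_sd x : size (sorted_desc x) = q.
Proof. by rewrite /sorted_desc size_sort size_map size_enum_ord. Qed.

Lemma sv_dec x : in_Delta (sv x).
Proof.
move=> i j ij; rewrite /sv.
have st : sorted (fun a b : R => b <= a) (sorted_desc x).
  apply: sort_sorted => a b; exact: le_total.
have tr : transitive (fun a b : R => b <= a) by move=> a b c ba cb; exact: le_trans cb ba.
have rf : reflexive (fun a b : R => b <= a) by move=> a.
by apply: (sorted_leq_nth tr rf 0 st) => //; rewrite inE size_sd.
Qed.

Lemma topsum_Ps x j : (j <= q)%N -> topsum x j = Ps j (sv x).
Proof. by move=> jq; rewrite /topsum (big_ord_widen _ _ jq). Qed.

Lemma card_pre j : (j <= q)%N -> #|[set i : 'I_q | (i < j)%N]| = j.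
Proof.
move=> jq; rewrite -sum1_card.
rewrite (eq_bigl (fun i : 'I_q => (i < j)%N)); last by move=> i; rewrite inE.
by rewrite -(big_ord_widen _ (fun _ => 1%N) jq) sum1_card card_ord.
Qed.

Lemma exch v (B : {set 'I_q}) j : in_Delta v -> #|B| = j ->
  \sum_(i in B) v i <= Ps j v.
Proof.
move=> Dv cB.
have jq : (j <= q)%N by rewrite -cB -[X in (_ <= X)%N]card_ord max_card.
case: j cB jq => [cB _|j cB jq].
  by rewrite (cards0_eq cB) big_set0 /Ps big1.
set A := [set i : 'I_q | (i < j.+1)%N].
have PA : Ps j.+1 v = \sum_(i in A) v i by apply: eq_bigl => i; rewrite inE.
rewrite PA.
set c := v (Ordinal jq).
rewrite (big_setID A) [X in _ <= X](big_setID B) /= setIC lerD2l.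
have cD : #|B :\: A| = #|A :\: B| by rewrite !cardsD cB card_pre // setIC.
apply: (@le_trans _ _ (c *+ #|B :\: A|)).
  rewrite -sumr_const; apply: ler_sum => i; rewrite /A !inE -leqNgt => /andP[ji _].
  by apply: Dv; exact: ltnW.
rewrite cD -sumr_const; apply: ler_sum => i; rewrite /A !inE => /andP[_ ij].
by apply: Dv; rewrite /= -ltnS.
Qed.

Lemma exch_perm v (t : 'S_q) j : in_Delta v -> (j <= q)%N ->
  Ps j (fun i => v (t i)) <= Ps j v.
Proof.
move=> Dv jq.
have E : Ps j (fun i => v (t i)) = \sum_(i in [set i | ((t^-1)%g i < j)%N]) v i.
  rewrite /Ps [RHS](reindex_inj (@perm_inj _ t)) /=; apply: eq_bigl => i.
  by rewrite inE permK.
rewrite E; apply: exch => //.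
rewrite -sum1_card (reindex_inj (@perm_inj _ t)) /=.
rewrite (eq_bigl (fun i : 'I_q => (i < j)%N)); last by move=> i; rewrite !inE permK.
by rewrite -(big_ord_widen _ (fun _ => 1%N) jq) sum1_card card_ord.
Qed.

Lemma Ps_perm_le x (t : 'S_q) j : (j <= q)%N -> Ps j (fun i => x (t i)) <= topsum x j.
Proof.
move=> jq; have [r hr] := sv_perm x.
rewrite topsum_Ps //.
have -> : (fun i => x (t i)) = (fun i => sv x ((t * r^-1)%g i)).
  by apply: functional_extensionality => i; rewrite hr permM permKV.
exact: exch_perm (sv_dec x) jq.
Qed.

Lemma topsum_dec v j : in_Delta v -> (j <= q)%N -> topsum v j = Ps j v.
Proof.
move=> Dv jq; apply/eqP; rewrite eq_le; apply/andP; split.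
  have [r hr] := sv_perm v; rewrite topsum_Ps //.
  rewrite (_ : sv v = fun i => v (r i)); last by apply: functional_extensionality.
  exact: exch_perm.
have := Ps_perm_le v (1%g : 'S_q) jq.
by rewrite (_ : (fun i => v ((1%g : 'S_q) i)) = v) // ; apply: functional_extensionality => i; rewrite perm1.
Qed.

Lemma topsum_le x y j : (j <= q)%N -> (forall i, x i <= y i) -> topsum x j <= topsum y j.
Proof.
move=> jq H; have [r hr] := sv_perm x; rewrite topsum_Ps //.
rewrite (_ : sv x = fun i => x (r i)); last by apply: functional_extensionality.
apply: le_trans (Ps_perm_le y r jq); apply: ler_sum => i _; exact: H.
Qed.

Variable C : ('I_q -> R) -> Prop.
Hypothesis extC : forall a b, C a -> a =1 b -> C b.
Hypothesis cvxC : forall a b t, C a -> C b -> 0 <= t <= 1 ->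
  C (fun i => t * a i + (1 - t) * b i).

Lemma V2 (flipC : forall a j0, C a -> C (fun i => (if i == j0 then -1 else 1) * a i)) a c :
  C a -> (forall i, `|c i| <= `|a i|) -> C c.
Proof.
move=> Ca; have [d] := ubnP #|[set i | a i != c i]|.
elim: d a Ca => // d IH a Ca; rewrite ltnS => Hd Hc.
case: (set_0Vmem [set i | a i != c i]) => [/setP E| [i0 Hi0]].
  apply: extC Ca _ => i; move: (E i); rewrite !inE => /negbFE/eqP //.
set w := fun i => if i == i0 then c i0 else a i.
have Cw : C w.
  rewrite inE in Hi0.
  have a0 : a i0 != 0.
    apply/negP=> /eqP a0; move: (Hc i0); rewrite a0 normr0 normr_le0 => /eqP c0.
    by move: Hi0; rewrite a0 c0 eqxx.
  have Hn : `|c i0 / a i0| <= 1.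
    by rewrite normrM normrV ?unitfE // ler_pdivrMr ?normr_gt0 // mul1r.
  move: Hn; rewrite ler_norml => /andP[h1 h2].
  set t := (1 + c i0 / a i0) / 2.
  have tb : 0 <= t <= 1 by apply/andP; split; rewrite /t; lra.
  apply: extC (cvxC Ca (flipC a i0 Ca) tb) _ => i.
  rewrite /w; case: eqP => [->|_]; last by ring.
  rewrite /t; field; exact: a0.
apply: (IH w Cw); last first.
  by move=> i; rewrite /w; case: eqP => // ->.
apply: leq_trans _ Hd; rewrite [X in (_ < X)%N](cardsD1 i0) Hi0 add1n ltnS.
apply: subset_leq_card; apply/subsetP => i; rewrite !inE /w.
by have [->|ne] := eqVneq i i0; [rewrite eqxx | move=> ->].
Qed.

Lemma Ps_ind (j : 'I_q) (i : nat) (d : R) :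
  Ps i (fun l : 'I_q => if (l == j :> nat) then d else 0) = if (j < i)%N then d else 0.
Proof.
rewrite /Ps -big_mkcondr /=.
case: (ltnP j i) => ji.
  rewrite (big_pred1 j) // => l /=.
  apply/andP/eqP => [[_ /eqP e]|e]; first by apply: val_inj.
  by rewrite e /= ji eqxx.
rewrite big_pred0 // => l; apply/negbTE/negP => /andP[li /eqP e].
by move: li; rewrite e ltnNge ji.
Qed.

Lemma PsS (k : 'I_q) v : Ps k.+1 v = Ps k v + v k.
Proof.
rewrite /Ps (bigD1 k) //= addrC; congr (_ + _); apply: eq_bigl => i.
by rewrite ltnS ltn_neqAle andbC.
Qed.

Lemma PsB (i : nat) v x : Ps i v - Ps i x = \sum_(l < q | (l < i)%N) (v l - x l).
Proof. by rewrite /Ps sumrB. Qed.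

Lemma core (permC : forall a (s : 'S_q), C a -> C (fun i => a (s i))) x a :
  in_Delta x -> C a -> (forall j, (j <= q)%N -> Ps j x <= Ps j a) ->
  exists b, [/\ C b, (forall j, (j <= q)%N -> Ps j x <= Ps j b), Ps q b = Ps q a &
                forall i, x i <= b i].
Proof.
move=> Dx Ca; have [d] := ubnP #|[set i | a i != x i]|.
elim: d a Ca => // d IH a Ca; rewrite ltnS => Hd Hdom.
case: (boolP [exists i, a i < x i]); last first.
  move=> /existsPn H; exists a; split => // i.
  by move: (H i); rewrite -leNgt.
case/existsP => i0 H0.
have [k Hk kmin] := @arg_minnP _ i0 (fun i => a i < x i) (fun i => nat_of_ord i) H0.
have kge : forall l : 'I_q, (l < k)%N -> x l <= a l.
  move=> l lk; rewrite leNgt; apply/negP => /kmin; by rewrite leqNgt lk.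
case: (boolP [exists j : 'I_q, (j < k)%N && (x j < a j)]); last first.
  move=> /existsPn H; exfalso.
  have E : Ps k a = Ps k x.
    apply/eqP; rewrite -subr_eq0 PsB; apply/eqP; apply: big1 => l lk.
    apply/eqP; rewrite subr_eq0 eq_le kge // andbT.
    by move: (H l); rewrite lk /= -leNgt.
  have := Hdom k.+1 (ltn_ord k); rewrite !PsS E lerD2l.
  by rewrite leNgt Hk.
case/existsP => j /andP[jk Hj].
have jnk : j != k by apply/negP => /eqP e; move: jk; rewrite e ltnn.
have ajk : a k < a j.
  apply: (lt_le_trans Hk); apply: (le_trans _ (ltW Hj)); apply: Dx; exact: ltnW.
have step : forall dl, 0 < dl -> dl <= a j - x j -> dl <= x k - a k ->
    (a j - dl = x j \/ a k + dl = x k) -> exists b, [/\ C b,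
      (forall j, (j <= q)%N -> Ps j x <= Ps j b), Ps q b = Ps q a &
       forall i, x i <= b i].
  move=> dl dl0 dl1 dl2 dl3.
  set a' := fun i => a i + (if (i == k :> nat) then dl else 0)
                         - (if (i == j :> nat) then dl else 0).
  have Ca' : C a'.
    set e := dl / (a j - a k).
    have ajk0 : a j - a k != 0 by rewrite subr_eq0 gt_eqF.
    have eb : 0 <= 1 - e <= 1.
      have ajk1 : 0 < a j - a k by rewrite subr_gt0.
      have xjk : x k <= x j by apply: Dx; exact: ltnW.
      have : e <= 1 by rewrite /e ler_pdivrMr // mul1r; lra.
      have : 0 <= e by rewrite /e divr_ge0 // ltW.
      move=> h1 h2; apply/andP; split; lra.
    apply: extC (cvxC Ca (permC a (tperm j k) Ca) eb) _ => i.
    rewrite /a'.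
    have [->|ij] := eqVneq i j.
      rewrite tpermL eqxx /= (negbTE (_ : (j : nat) != k)); last by [].
      rewrite /e; field; exact: ajk0.
    have [->|ik] := eqVneq i k.
      rewrite tpermR eqxx /= (_ : ((k : nat) == j) = false); last first.
        by apply/negbTE; rewrite eq_sym.
      rewrite /e; field; exact: ajk0.
    rewrite (tpermD (_ : j != i) (_ : k != i)); [|by rewrite eq_sym|by rewrite eq_sym].
    rewrite !val_eqE (negbTE ik) (negbTE ij); ring.
  have Psa' : forall i, Ps i a' = Ps i a + (if (k < i)%N then dl else 0)
                                       - (if (j < i)%N then dl else 0).
    move=> i; rewrite /a' /Ps sumrB big_split /=.
    by rewrite -!/(Ps _ _) !Ps_ind.
  have dom' : forall i, (i <= q)%N -> Ps i x <= Ps i a'.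
    move=> i iq; rewrite Psa'.
    case: (ltnP j i) => ji; last first.
      rewrite (_ : (k < i)%N = false) ?subr0 ?addr0 ?Hdom //.
      apply/negbTE; rewrite -leqNgt; apply: leq_trans ji _; exact: ltnW.
    case: (ltnP k i) => ki.
      by rewrite addrK Hdom.
    suff : dl <= Ps i a - Ps i x by move=> h; lra.
    rewrite PsB (bigD1 j) //=.
    apply: le_trans dl1 _; rewrite lerDl; apply: sumr_ge0 => l /andP[li _].
    rewrite subr_ge0; apply: kge; exact: leq_trans li ki.
  have [b [Cb dombb Psb xb]] : exists b, [/\ C b,
      (forall j, (j <= q)%N -> Ps j x <= Ps j b), Ps q b = Ps q a' &
       forall i, x i <= b i].
    apply: (IH a' Ca') => //.
    apply: leq_trans _ Hd.
    have [e0 [e0a e0b]] : exists e0, e0 \in [set i | a i != x i] /\ a' e0 = x e0.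
      case: dl3 => [h|h]; [exists j|exists k]; rewrite inE; split.
      - by rewrite gt_eqF.
      - by rewrite /a' eqxx /= (negbTE (_ : (j : nat) != k)) // addr0.
      - by rewrite lt_eqF.
      - by rewrite /a' eqxx /= (_ : ((k : nat) == j) = false) ?subr0 //; apply/negbTE; rewrite eq_sym.
    rewrite [X in (_ < X)%N](cardsD1 e0) e0a add1n ltnS.
    apply: subset_leq_card; apply/subsetP => i; rewrite !inE.
    have [->|ne] := eqVneq i e0; first by rewrite e0b eqxx.
    move=> H; apply/andP; split => //.
    have [->|ij] := eqVneq i j; first by rewrite gt_eqF.
    have [->|ik] := eqVneq i k; first by rewrite lt_eqF.
    by move: H; rewrite /a' !val_eqE (negbTE ik) (negbTE ij) addr0 subr0.
  by exists b; split => //; rewrite Psb Psa' !ltn_ord addrK.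
have [hle|hlt] := lerP (a j - x j) (x k - a k).
  apply: (step (a j - x j)) => //; [by rewrite subr_gt0| left; ring].
apply: (step (x k - a k)) => //; [by rewrite subr_gt0| exact: ltW | right; ring].
Qed.
End Vec.

Section Vec2.
Variables (R : realFieldType) (q : nat).
Implicit Types (x v : 'I_q -> R).

Lemma Ps_lin N (l : 'I_N -> R) (f : 'I_N -> 'I_q -> R) j :
  Ps j (fun a => \sum_(i < N) l i * f i a) = \sum_(i < N) l i * Ps j (f i).
Proof.
rewrite /Ps exchange_big /=; apply: eq_bigr => i _; by rewrite mulr_sumr.
Qed.

Lemma dec_conv N (l : 'I_N -> R) (f : 'I_N -> 'I_q -> R) :
  (forall i, 0 <= l i) -> (forall i, in_Delta (f i)) ->
  in_Delta (fun a => \sum_(i < N) l i * f i a).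
Proof.
move=> l0 D a b ab; apply: ler_sum => i _; apply: ler_wpM2l => //; exact: D.
Qed.

Lemma topsum_conv N (l : 'I_N -> R) (f : 'I_N -> 'I_q -> R) j :
  (j <= q)%N -> (forall i, 0 <= l i) ->
  topsum (fun a => \sum_(i < N) l i * f i a) j <= \sum_(i < N) l i * topsum (f i) j.
Proof.
move=> jq l0; have [r hr] := sv_perm (fun a => \sum_(i < N) l i * f i a).
rewrite topsum_Ps // (_ : sv _ = fun a => \sum_(i < N) l i * f i (r a)); last first.
  by apply: functional_extensionality => a; rewrite hr.
rewrite (Ps_lin l (fun i a => f i (r a))); apply: ler_sum => i _.
apply: ler_wpM2l => //; exact: Ps_perm_le.
Qed.

Lemma topsum_q x : topsum x q = Ps q x.
Proof.
have [r hr] := sv_perm x; rewrite topsum_Ps //.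
rewrite (_ : sv x = fun a => x (r a)); last by apply: functional_extensionality.
rewrite /Ps [RHS](reindex_inj (@perm_inj _ r)) /=.
by apply: eq_bigl => i; rewrite !ltn_ord.
Qed.

Lemma sv_ge0 x : (forall i, 0 <= x i) -> forall i, 0 <= sv x i.
Proof. by move=> H i; have [r hr] := sv_perm x; rewrite hr. Qed.
End Vec2.


Section Pt.
Variables (R : realFieldType) (m : nat) (n : 'I_m -> nat) (p : nat).
Local Notation pt := (point R m n p).
Implicit Types (S : pt -> Prop) (v w y : pt).

Definition upd_blk (v : pt) (k : 'I_m) (f : 'I_(n k) -> R) : pt :=
  (fun k' => if k' =P k is ReflectT e then
                eq_rect_r (fun k0 => 'I_(n k0) -> R) f e else v.1 k', v.2).

Arguments upd_blk : clear implicits.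

Lemma upd_same v k f j : (upd_blk v k f).1 k j = f j.
Proof.
rewrite /upd_blk /=; case: eqP => // e.
by rewrite (eq_irrelevance e erefl).
Qed.

Lemma upd_other v k f k' : k' != k -> (upd_blk v k f).1 k' = v.1 k'.
Proof. by rewrite /upd_blk /=; case: eqP. Qed.

Lemma upd_2 v k f : (upd_blk v k f).2 = v.2.
Proof. by []. Qed.

Lemma conv_ext S v w : conv S v -> (forall k j, w.1 k j = v.1 k j) ->
  (forall j, w.2 j = v.2 j) -> conv S w.
Proof.
case=> N [l [s [H1 H2 H3 H4 H5]]] E1 E2; exists N, l, s; split => //.
- by move=> k j; rewrite E1 H4.
- by move=> j; rewrite E2 H5.
Qed.

Lemma conv_mono S (T : pt -> Prop) v : (forall w, S w -> T w) -> conv S v -> conv T v.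
Proof.
move=> ST; case=> N [l [s [H1 H2 H3 H4 H5]]]; exists N, l, s; split => // i.
exact: ST.
Qed.

Lemma sum_split N1 N2 (F : 'I_N1 + 'I_N2 -> R) :
  \sum_(i < N1 + N2) F (split i) = \sum_(a < N1) F (inl a) + \sum_(b < N2) F (inr b).
Proof.
rewrite big_split_ord; congr (_ + _); apply: eq_bigr => a _.
  by rewrite (unsplitK (inl _ a) : split (lshift N2 a) = inl a).
by rewrite (unsplitK (inr _ a) : split (rshift N1 a) = inr a).
Qed.

Lemma conv_mix S v1 v2 t w : conv S v1 -> conv S v2 -> 0 <= t <= 1 ->
  (forall k j, w.1 k j = t * v1.1 k j + (1 - t) * v2.1 k j) ->
  (forall j, w.2 j = t * v1.2 j + (1 - t) * v2.2 j) -> conv S w.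
Proof.
case=> N1 [l1 [s1 [A1 A2 A3 A4 A5]]]; case=> N2 [l2 [s2 [B1 B2 B3 B4 B5]]].
move=> /andP[t0 t1] E1 E2.
pose L (s : 'I_N1 + 'I_N2) := match s with inl a => t * l1 a | inr b => (1 - t) * l2 b end.
pose P (s : 'I_N1 + 'I_N2) := match s with inl a => s1 a | inr b => s2 b end.
exists (N1 + N2), (fun i => L (split i)), (fun i => P (split i)); split.
- move=> i; rewrite /L; case: (split i) => a; apply: mulr_ge0 => //.
  by rewrite subr_ge0.
- by rewrite (sum_split L) /L -!mulr_sumr A2 B2 !mulr1 addrC subrK.
- by move=> i; rewrite /P; case: (split i).
- move=> k j; rewrite (sum_split (fun s => L s * (P s).1 k j)) /L /P E1 A4 B4.
  by rewrite !mulr_sumr; congr (_ + _); apply: eq_bigr => a _; rewrite mulrA.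
- move=> j; rewrite (sum_split (fun s => L s * (P s).2 j)) /L /P E2 A5 B5.
  by rewrite !mulr_sumr; congr (_ + _); apply: eq_bigr => a _; rewrite mulrA.
Qed.

Lemma conv_lin S k (g : 'I_(n k) -> R) (h : 'I_(n k) -> 'I_(n k)) v :
  (forall w, S w -> S (upd_blk w k (fun j => g j * w.1 k (h j)))) ->
  conv S v -> conv S (upd_blk v k (fun j => g j * v.1 k (h j))).
Proof.
move=> HS; case=> N [l [s [H1 H2 H3 H4 H5]]].
exists N, l, (fun i => upd_blk (s i) k (fun j => g j * (s i).1 k (h j))); split => //.
- by move=> i; apply: HS.
- move=> k'; have [->|ne] := eqVneq k' k => j.
    rewrite upd_same H4 mulr_sumr; apply: eq_bigr => i _.
    by rewrite upd_same mulrCA.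
  by rewrite upd_other // H4; apply: eq_bigr => i _; rewrite upd_other.
Qed.

Lemma block_ind (P : pt -> Prop) (u : forall k, 'I_(n k) -> R) z y :
  P (u, z) -> (forall w k, P w -> w.1 k =1 u k -> P (upd_blk w k (y.1 k))) ->
  exists w, [/\ P w, (forall k, w.1 k =1 y.1 k) & w.2 = z].
Proof.
move=> P0 st.
suff : forall r, (r <= m)%N -> exists w, [/\ P w, w.2 = z &
         forall k : 'I_m, if (k < r)%N then w.1 k =1 y.1 k else w.1 k =1 u k].
  case/(_ m (leqnn m)) => w [Pw w2 Hw]; exists w; split => // k.
  by move: (Hw k); rewrite ltn_ord.
elim=> [_|r IH rm].
  by exists (u, z); split => // k.
have [w [Pw w2 Hw]] := IH (ltnW rm).
exists (upd_blk w (Ordinal rm) (y.1 (Ordinal rm))); split => //.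
  apply: st => //; move: (Hw (Ordinal rm)); by rewrite ltnn.
move=> k; have [e|ne] := eqVneq k (Ordinal rm).
  by rewrite e ltnSn => j; rewrite upd_same.
rewrite upd_other // ltnS leq_eqVlt.
have -> : (k == r :> nat) = false.
  by apply/negbTE; apply: contra ne => /eqP e; apply/eqP/val_inj.
exact: (Hw k).
Qed.

Lemma pt_eq (v w : pt) : (forall k j, v.1 k j = w.1 k j) -> (forall j, v.2 j = w.2 j) -> v = w.
Proof.
case: v => v1 v2; case: w => w1 w2 /= E1 E2; congr (_, _).
  apply: functional_extensionality_dep => k; apply: functional_extensionality => j; exact: E1.
by apply: functional_extensionality.
Qed.

Section Blk.
Variables (S : pt -> Prop) (w : pt) (k : 'I_m).
Hypothesis Sw : conv S w.
Let C := fun c => conv S (upd_blk w k c).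

Lemma C_ext a b : C a -> a =1 b -> C b.
Proof.
rewrite /C => Ca ab; apply: conv_ext Ca _ _ => // k' j.
have [e|ne] := eqVneq k' k; last by rewrite !upd_other.
by move: j; rewrite e => j; rewrite !upd_same.
Qed.

Lemma C_cvx a b t : C a -> C b -> 0 <= t <= 1 -> C (fun i => t * a i + (1 - t) * b i).
Proof.
rewrite /C => Ca Cb tb; apply: (conv_mix Ca Cb tb) => [k' j|j]; last by rewrite /= ; ring.
have [e|ne] := eqVneq k' k; last by rewrite !upd_other //; ring.
by move: j; rewrite e => j; rewrite !upd_same.
Qed.

Lemma C_w : C (w.1 k).
Proof.
rewrite /C; apply: conv_ext Sw _ _ => // k' j.
have [e|ne] := eqVneq k' k; last by rewrite !upd_other.
by move: j; rewrite e => j; rewrite !upd_same.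
Qed.

Lemma C_perm (PI : perm_invariant S k) a (s : 'S_(n k)) : C a -> C (fun i => a (s i)).
Proof.
rewrite /C => Ca.
have := conv_lin (g := fun _ => 1) (h := s) _ Ca.
have -> : upd_blk (upd_blk w k a) k (fun j => 1 * (upd_blk w k a).1 k (s j)) =
          upd_blk w k (fun i => a (s i)).
  apply: pt_eq => // k' j; have [e|ne] := eqVneq k' k; last by rewrite !upd_other.
  by move: j; rewrite e => j; rewrite !upd_same mul1r.
apply=> v Sv; apply: (PI v) => //.
- by move=> k' ne j; rewrite upd_other.
- by exists s => j; rewrite upd_same mul1r.
Qed.

Lemma C_flip (SI : sign_invariant S k) a j0 : C a ->
  C (fun i => (if i == j0 then -1 else 1) * a i).
Proof.
rewrite /C => Ca.
have := conv_lin (g := fun i => if i == j0 then -1 else 1) (h := id) _ Ca.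
have -> : upd_blk (upd_blk w k a) k
     (fun j => (if j == j0 then -1 else 1) * (upd_blk w k a).1 k (id j)) =
          upd_blk w k (fun i => (if i == j0 then -1 else 1) * a i).
  apply: pt_eq => // k' j; have [e|ne] := eqVneq k' k; last by rewrite !upd_other.
  by move: j; rewrite e => j; rewrite !upd_same.
apply=> v Sv; apply: (SI v) => //.
- by move=> k' ne j; rewrite upd_other.
- move=> j; rewrite upd_same normrM /=; case: (j == j0);
  by rewrite ?normrN normr1 mul1r.
Qed.

Lemma B1 (PI : perm_invariant S k) c : majorizes (w.1 k) c -> C c.
Proof.
move=> [Hm He]; set a := w.1 k.
have [ra hra] := sv_perm a; have [rc hrc] := sv_perm c.
have Csa : C (sv a).
  apply: C_ext (C_perm PI ra C_w) _ => i; by rewrite hra.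
have dom : forall j, (j <= n k)%N -> Ps j (sv c) <= Ps j (sv a).
  move=> j; rewrite leq_eqVlt => /orP[/eqP ->|jq].
    by rewrite -!topsum_Ps // He.
  by rewrite -!topsum_Ps ?Hm // ltnW.
have [b [Cb _ Psb xb]] := core C_ext C_cvx (C_perm PI) (sv_dec c) Csa dom.
have bx : b =1 sv c.
  have : \sum_(i < n k | (i < n k)%N) (b i - sv c i) = 0.
    by rewrite -PsB Psb -!topsum_Ps // He subrr.
  move/psumr_eq0P => H i; apply/eqP; rewrite -subr_eq0; apply/eqP/H => //.
  by move=> i0 _; rewrite subr_ge0.
have Csc : C (sv c) by apply: C_ext Cb bx.
apply: C_ext (C_perm PI (rc^-1)%g Csc) _ => i; by rewrite hrc permKV.
Qed.

Lemma B2 (SI : sign_invariant S k) c : (forall j, `|c j| <= w.1 k j) -> C c.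
Proof.
move=> H; apply: (V2 C_ext C_cvx (fun a j0 => C_flip SI j0) C_w) => i.
by apply: le_trans (H i) _; exact: ler_norm.
Qed.

Lemma B3 (PI : perm_invariant S k) (SI : sign_invariant S k) c :
  wmajorizes (w.1 k) (fun j => `|c j|) -> C c.
Proof.
move=> Hw; set a := w.1 k.
have V2' := V2 C_ext C_cvx (fun a j0 => C_flip SI j0).
have Ca' : C (fun j => `|a j|) by apply: V2' C_w _ => i; rewrite normr_id.
set a' := fun j => `|a j|.
have [ra hra] := sv_perm a'; have [rc hrc] := sv_perm (fun j => `|c j|).
have Csa : C (sv a').
  apply: C_ext (C_perm PI ra Ca') _ => i; by rewrite hra.
have dom : forall j, (j <= n k)%N -> Ps j (sv (fun j => `|c j|)) <= Ps j (sv a').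
  move=> j jq; rewrite -!topsum_Ps //; apply: le_trans (Hw j jq) _.
  by apply: topsum_le => // i; exact: ler_norm.
have [b [Cb _ _ xb]] := core C_ext C_cvx (C_perm PI) (sv_dec _) Csa dom.
have Csc : C (sv (fun j => `|c j|)).
  apply: V2' Cb _ => i; rewrite ger0_norm; last by rewrite hrc.
  by rewrite ger0_norm // (le_trans _ (xb i)) // hrc.
have Cac : C (fun j => `|c j|).
  apply: C_ext (C_perm PI (rc^-1)%g Csc) _ => i; by rewrite hrc permKV.
by apply: V2' Cac _ => i; rewrite normr_id.
Qed.
End Blk.

Lemma back S (Rel : forall k, ('I_(n k) -> R) -> ('I_(n k) -> R) -> Prop)
    (u : forall k, 'I_(n k) -> R) y :
  (forall w k c, conv S w -> Rel k (w.1 k) c -> conv S (upd_blk w k c)) ->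
  conv S (u, y.2) -> (forall k, Rel k (u k) (y.1 k)) -> conv S y.
Proof.
move=> st Cu Hr.
have [w [Cw E1 E2]] : exists w, [/\ conv S w, (forall k, w.1 k =1 y.1 k) & w.2 = y.2].
  apply: (block_ind Cu) => w k Cw e; apply: st => //.
  by rewrite (functional_extensionality _ _ e).
suff -> : y = w by [].
by apply: pt_eq => [k j|j]; rewrite ?E1 ?E2.
Qed.

Lemma normS S (F : forall k, ('I_(n k) -> R) -> ('I_(n k) -> R)) :
  (forall v k, S v -> S (upd_blk v k (F k (v.1 k)))) ->
  forall v, S v -> S ((fun k => F k (v.1 k)), v.2).
Proof.
move=> st v Sv.
have [w [Sw E1 E2]] : exists w, [/\ S w,
    (forall k, w.1 k =1 ((fun k => F k (v.1 k)), v.2).1 k) & w.2 = v.2].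
  apply: (block_ind (P := S) (u := v.1)); first by case: v Sv.
  move=> w k Sw e /=; rewrite -(functional_extensionality _ _ e); exact: st.
suff <- : w = ((fun k => F k (v.1 k)), v.2) by [].
by apply: pt_eq => [k j|j]; rewrite ?E1 ?E2.
Qed.

Lemma forth S (F : forall k, ('I_(n k) -> R) -> ('I_(n k) -> R)) (Q : pt -> Prop) y :
  (forall v k, S v -> S (upd_blk v k (F k (v.1 k)))) ->
  (forall v, S v -> Q ((fun k => F k (v.1 k)), v.2)) ->
  conv S y -> exists N (l : 'I_N -> R) (s : 'I_N -> pt),
   [/\ (forall i, 0 <= l i), \sum_(i < N) l i = 1, (forall i, S (s i)),
       (forall k j, y.1 k j = \sum_(i < N) l i * (s i).1 k j) &
   conv (fun v => S v /\ Q v)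
     ((fun k j => \sum_(i < N) l i * F k ((s i).1 k) j), y.2)].
Proof.
move=> st HQ [N [l [s [H1 H2 H3 H4 H5]]]]; exists N, l, s; split => //.
exists N, l, (fun i => ((fun k => F k ((s i).1 k)), (s i).2)); split => //.
by move=> i; split; [apply: (normS st) | apply: HQ].
Qed.

End Pt.

Arguments upd_blk {R m n p} v k f.


Unset Implicit Arguments.

Theorem theorem4 (R : realFieldType) (m : nat) (n : 'I_m -> nat) (p : nat)
    (S : point R m n p -> Prop) :
  ((forall k, perm_invariant S k) ->
     forall y : point R m n p,
       conv S y <->
       exists u : forall k : 'I_m, 'I_(n k) -> R,
         conv (fun v : point R m n p => S v /\ forall k, in_Delta (v.1 k)) (u, y.2)
         /\ forall k, majorizes (u k) (y.1 k))
  /\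
  ((forall k, sign_invariant S k) ->
     forall y : point R m n p,
       conv S y <->
       exists u : forall k : 'I_m, 'I_(n k) -> R,
         conv (fun v : point R m n p => S v /\ forall k j, 0 <= v.1 k j) (u, y.2)
         /\ forall k j, `|y.1 k j| <= u k j)
  /\
  ((forall k, perm_invariant S k /\ sign_invariant S k) ->
     forall y : point R m n p,
       conv S y <->
       exists u : forall k : 'I_m, 'I_(n k) -> R,
         conv (fun v : point R m n p =>
                 S v /\ forall k, in_Delta (v.1 k) /\ forall j, 0 <= v.1 k j)
              (u, y.2)
         /\ forall k, wmajorizes (u k) (fun j => `|y.1 k j|)).
Proof.
split; [|split].
- move=> PI y; split.
  + move=> Cy.
    have st : forall v k, S v -> S (upd_blk v k (sv (v.1 k))).
      move=> v k Sv; apply: (PI k v) => //.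
      - by move=> k' ne j; rewrite upd_other.
      - have [r hr] := sv_perm (v.1 k); exists r => j; by rewrite upd_same hr.
    have [N [l [s [H1 H2 H3 H4 Cu]]]] :=
      forth (F := fun k x => sv x) (Q := fun v => forall k, in_Delta (v.1 k)) st
        (fun v _ k => sv_dec _) Cy.
    exists (fun k j => \sum_(i < N) l i * sv ((s i).1 k) j); split => // k.
    have yk : y.1 k = (fun a => \sum_(i < N) l i * (s i).1 k a).
      by apply: functional_extensionality => a; rewrite H4.
    have Du : in_Delta (fun j => \sum_(i < N) l i * sv ((s i).1 k) j).
      by apply: dec_conv => // i; exact: sv_dec.
    split.
    * move=> j jq; have jq' := ltnW jq.
      rewrite yk [X in _ <= X]topsum_dec // (Ps_lin l (fun i => sv ((s i).1 k))).
      apply: le_trans (topsum_conv (fun i => (s i).1 k) jq' H1) _.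
      by apply: ler_sum => i _; rewrite topsum_Ps.
    * rewrite yk !topsum_q (Ps_lin l (fun i => sv ((s i).1 k))) Ps_lin.
      by apply: eq_bigr => i _; rewrite -topsum_Ps // topsum_q.
  + case=> u [Cu Hm].
    apply: (back (Rel := fun k a c => majorizes a c)) _ (conv_mono _ Cu) Hm.
    * move=> w k c Cw Hc. exact: (@B1 _ _ _ _ S w k Cw (PI k) c Hc).
    * by move=> v [].
- move=> SI y; split.
  + move=> Cy.
    have st : forall v k, S v -> S (upd_blk v k (fun j => `|v.1 k j|)).
      move=> v k Sv; apply: (SI k v) => //.
      - by move=> k' ne j; rewrite upd_other.
      - by move=> j; rewrite upd_same normr_id.
    have [N [l [s [H1 H2 H3 H4 Cu]]]] :=
      forth (F := fun k x j => `|x j|) (Q := fun v => forall k j, 0 <= v.1 k j) st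
        (fun v _ k j => normr_ge0 _) Cy.
    exists (fun k j => \sum_(i < N) l i * `|(s i).1 k j|); split => // k j.
    rewrite H4; apply: le_trans (ler_norm_sum _ _ _) _.
    by apply: ler_sum => i _; rewrite normrM (ger0_norm (H1 i)).
  + case=> u [Cu Hm].
    apply: (back (Rel := fun k a c => forall j, `|c j| <= a j)) _ (conv_mono _ Cu) Hm.
    * by move=> w k c Cw Hc; exact: (@B2 _ _ _ _ S w k Cw (SI k) c Hc).
    * by move=> v [].
- move=> PSI y; split.
  + move=> Cy.
    have st : forall v k, S v -> S (upd_blk v k (sv (fun j => `|v.1 k j|))).
      move=> v k Sv; have [PI SI] := PSI k.
      have S1 := SI v (upd_blk v k (fun j => `|v.1 k j|)) Sv.
      have {S1} S1 : S (upd_blk v k (fun j => `|v.1 k j|)).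
        apply: S1 => //; first by move=> k' ne j; rewrite upd_other.
        by move=> j; rewrite upd_same normr_id.
      apply: (PI _ _ S1) => //.
      - by move=> k' ne j; rewrite !upd_other.
      - have [r hr] := sv_perm (fun j => `|v.1 k j|); exists r => j.
        by rewrite !upd_same hr.
    have [N [l [s [H1 H2 H3 H4 Cu]]]] :=
      forth (F := fun k x => sv (fun j => `|x j|))
            (Q := fun v => forall k, in_Delta (v.1 k) /\ forall j, 0 <= v.1 k j) st
            (fun v _ k => conj (sv_dec _) (sv_ge0 (fun j => normr_ge0 _))) Cy.
    exists (fun k j => \sum_(i < N) l i * sv (fun a => `|(s i).1 k a|) j); split => // k.
    have Du : in_Delta (fun j => \sum_(i < N) l i * sv (fun a => `|(s i).1 k a|) j).
      by apply: dec_conv => // i; exact: sv_dec.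
    move=> j jq.
    rewrite [X in _ <= X]topsum_dec // (Ps_lin l (fun i => sv (fun a => `|(s i).1 k a|))).
    apply: le_trans (_ : topsum (fun a => \sum_(i < N) l i * `|(s i).1 k a|) j <= _).
      apply: topsum_le => // a; rewrite H4; apply: le_trans (ler_norm_sum _ _ _) _.
      by apply: ler_sum => i _; rewrite normrM (ger0_norm (H1 i)).
    apply: le_trans (topsum_conv (fun i a => `|(s i).1 k a|) jq H1) _.
    by apply: ler_sum => i _; rewrite topsum_Ps.
  + case=> u [Cu Hm].
    apply: (back (Rel := fun k a c => wmajorizes a (fun j => `|c j|))) _ (conv_mono _ Cu) Hm.
    * move=> w k c Cw Hc; have [PI SI] := PSI k; exact: (@B3 _ _ _ _ S w k Cw PI SI c Hc).
    * by move=> v [].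
Qed.
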